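(* For any strong algebra $\mathcal{A}=(A,\le,\otimes,e,\to_{\mathcal{A}})$ there exist a non-commutative spacetime $\mathcal{S}=(\mathscr{X},\nabla)$, a monotone map $F:\mathscr{X}\to\mathscr{X}$ and a strict monoidal order embedding $i:(A,\le,\otimes,e)\to\mathscr{X}$ such that $i(a\to_{\mathcal{A}}b)=F(i(a))\to_{\mathcal{S}}F(i(b))$ for all $a,b\in A$.
   Context: A monoidal poset $(A,\le,\otimes,e)$ is a poset with a monoid structure whose multiplication is monotone in each argument. An implication on it is a function $\to:A^{op}\times A\to A$ (antitone in the first, monotone in the second argument) with $e\le a\to a$ and $(a\to b)\otimes(b\to c)\le a\to c$ for all $a,b,c$; a strong algebra is a monoidal poset with an implication. A quantale is a monoidal poset with all joins whose multiplication distributes over arbitrary joins in each argument. A non-commutative spacetime is $(\mathscr{X},\nabla)$ with $\mathscr{X}$ a quantale and $\nabla$ join preserving and oplax monoidal ($\nabla e\le e$, $\nabla(a\otimes b)\le\nabla a\otimes\nabla b$). Its implication $\to_{\mathcal{S}}$ is $a\to_{\mathcal{S}}b=\Box(a\Rightarrow b)$, where $\Box$ is the right adjoint of $\nabla$ and $\Rightarrow$ the right adjoint of $a\otimes(-)$; equivalently $a\otimes\nabla b\le c$ iff $b\le a\to_{\mathcal{S}}c$. A strict monoidal order embedding is a map $i$ with $i(e)=e$, $i(a\otimes b)=i(a)\otimes i(b)$ and $a\le b\iff i(a)\le i(b)$. *)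

(* Defs.v *)
Set Implicit Arguments.
Unset Strict Implicit.

Record monoidal_poset (A : Type) (le : A -> A -> Prop) (mul : A -> A -> A) (e : A)
  : Prop := {
  mp_refl : forall a, le a a;
  mp_trans : forall a b c, le a b -> le b c -> le a c;
  mp_antisym : forall a b, le a b -> le b a -> a = b;
  mp_assoc : forall a b c, mul (mul a b) c = mul a (mul b c);
  mp_unit_l : forall a, mul e a = a;
  mp_unit_r : forall a, mul a e = a;
  mp_mono_l : forall a a' b, le a a' -> le (mul a b) (mul a' b);
  mp_mono_r : forall a b b', le b b' -> le (mul a b) (mul a b')
}.

Record is_implication (A : Type) (le : A -> A -> Prop) (mul : A -> A -> A) (e : A)
  (imp : A -> A -> A) : Prop := {
  imp_anti : forall a a' b, le a a' -> le (imp a' b) (imp a b);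
  imp_mono : forall a b b', le b b' -> le (imp a b) (imp a b');
  imp_refl : forall a, le e (imp a a);
  imp_comp : forall a b c, le (mul (imp a b) (imp b c)) (imp a c)
}.

Definition strong_algebra (A : Type) (le : A -> A -> Prop) (mul : A -> A -> A) (e : A)
  (imp : A -> A -> A) : Prop :=
  monoidal_poset le mul e /\ is_implication le mul e imp.

Record Quantale : Type := {
  qcar :> Type;
  qle : qcar -> qcar -> Prop;
  qmul : qcar -> qcar -> qcar;
  qe : qcar;
  qsup : (qcar -> Prop) -> qcar;
  q_mp : monoidal_poset qle qmul qe;
  q_sup_ub : forall (S : qcar -> Prop) x, S x -> qle x (@qsup S);
  q_sup_least : forall (S : qcar -> Prop) u, (forall x, S x -> qle x u) -> qle (@qsup S) u;
  q_distr_l : forall a (S : qcar -> Prop),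
      qmul a (@qsup S) = qsup (fun y => exists x, S x /\ y = qmul a x);
  q_distr_r : forall a (S : qcar -> Prop),
      qmul (@qsup S) a = qsup (fun y => exists x, S x /\ y = qmul x a)
}.

Record Spacetime : Type := {
  st_q :> Quantale;
  nabla : st_q -> st_q;
  nabla_join : forall (S : st_q -> Prop),
      nabla (@qsup st_q S) = @qsup st_q (fun y => exists x, S x /\ y = nabla x);
  nabla_unit : @qle st_q (nabla (@qe st_q)) (@qe st_q);
  nabla_mul : forall a b,
      @qle st_q (nabla (@qmul st_q a b)) (@qmul st_q (nabla a) (nabla b))
}.

(** Right adjoint of [a ⊗ (-)]:  a ⇒ b = ⋁ {x | a ⊗ x ≤ b}. *)
Definition rimp (S : Spacetime) (a b : S) : S :=
  @qsup S (fun x => @qle S (@qmul S a x) b).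

(** Box = right adjoint of nabla:  Box a = ⋁ {x | nabla x ≤ a}. *)
Definition box (S : Spacetime) (a : S) : S :=
  @qsup S (fun x => @qle S (@nabla S x) a).

Definition impS (S : Spacetime) (a b : S) : S := @box S (@rimp S a b).

Definition strict_monoidal_order_embedding (A : Type) (le : A -> A -> Prop)
  (mul : A -> A -> A) (e : A) (X : Quantale) (i : A -> X) : Prop :=
  i e = @qe X /\ (forall a b, i (mul a b) = @qmul X (i a) (i b)) /\
  (forall a b, le a b <-> @qle X (i a) (i b)).

(* Main.v *)
Require Import Defs.
From Stdlib Require Import FunctionalExtensionality PropExtensionality ProofIrrelevance.

Section Constr.
Variables (A : Type) (le : A -> A -> Prop) (mul : A -> A -> A) (e : A) (imp : A -> A -> A).
Hypothesis H : strong_algebra le mul e imp.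

Definition M := (A * (A -> Prop))%type.
Definition leM (p q : M) : Prop := le (fst p) (fst q) /\ (forall z, snd p z -> snd q z).
Definition mulM (p q : M) : M := (mul (fst p) (fst q), fun z => snd p z /\ snd q z).
Definition topP : A -> Prop := fun _ => True.
Definition eM : M := (e, topP).

Definition dc (U : M -> Prop) := forall p q, leM p q -> U q -> U p.
Definition D := { U : M -> Prop | dc U }.

Lemma mp : monoidal_poset le mul e. Proof. exact (proj1 H). Qed.
Lemma ip : is_implication le mul e imp. Proof. exact (proj2 H). Qed.

Lemma leM_refl p : leM p p.
Proof. split; [apply (mp_refl mp)|auto]. Qed.
Lemma leM_trans p q r : leM p q -> leM q r -> leM p r.
Proof. intros [h1 h2] [k1 k2]; split; [eapply (mp_trans mp); eauto|auto]. Qed.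
Lemma leM_mul p q p' q' : leM p p' -> leM q q' -> leM (mulM p q) (mulM p' q').
Proof.
  intros [h1 h2] [k1 k2]; split; simpl.
  - eapply (mp_trans mp). apply (mp_mono_l mp); eauto. apply (mp_mono_r mp); eauto.
  - intros z [a b]; auto.
Qed.

Lemma D_ext (U V : D) : (forall p, proj1_sig U p <-> proj1_sig V p) -> U = V.
Proof.
  destruct U as [U hU], V as [V hV]; simpl; intros h.
  assert (U = V) by (apply functional_extensionality; intro p; apply propositional_extensionality; auto).
  subst. f_equal. apply proof_irrelevance.
Qed.

Definition Dle (U V : D) := forall p, proj1_sig U p -> proj1_sig V p.

Program Definition Dmul (U V : D) : D :=
  fun p => exists q r, proj1_sig U q /\ proj1_sig V r /\ leM p (mulM q r).
Next Obligation. intros p q h [q0 [r [h1 [h2 h3]]]]. exists q0, r; split; [|split]; eauto using leM_trans. Qed.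

Program Definition De : D := fun p => leM p eM.
Next Obligation. intros p q h h'; eauto using leM_trans. Qed.

Program Definition Dsup (S : D -> Prop) : D := fun p => exists U, S U /\ proj1_sig U p.
Next Obligation. intros p q h [U [h1 h2]]. exists U; split; auto. exact (proj2_sig U p q h h2). Qed.

Lemma Dmp : monoidal_poset Dle Dmul De.
Proof.
  split.
  - intros a p; auto.
  - intros a b c h1 h2 p hp; auto.
  - intros a b h1 h2; apply D_ext; split; auto.
  - intros a b c; apply D_ext; intro p; simpl; split.
    + intros [q [r [[q1 [r1 [h1 [h2 h3]]]] [h4 h5]]]].
      exists q1, (mulM r1 r). split; auto. split.
      * exists r1, r; split; auto; split; auto; apply leM_refl.
      * eapply leM_trans; [exact h5|]. eapply leM_trans. apply leM_mul; [exact h3|apply leM_refl].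
        split; simpl. rewrite (mp_assoc mp); apply (mp_refl mp). tauto.
    + intros [q [r [h1 [[q1 [r1 [h2 [h3 h4]]]] h5]]]].
      exists (mulM q q1), r1. split.
      * exists q, q1; split; auto; split; auto; apply leM_refl.
      * split; auto. eapply leM_trans; [exact h5|]. eapply leM_trans. apply leM_mul; [apply leM_refl|exact h4].
        split; simpl. rewrite (mp_assoc mp); apply (mp_refl mp). tauto.
  - intros a; apply D_ext; intro p; simpl; split.
    + intros [q [r [h1 [h2 h3]]]]. apply (proj2_sig a p r); auto.
      eapply leM_trans; [exact h3|]. eapply leM_trans. apply leM_mul; [exact h1|apply leM_refl].
      split; simpl. rewrite (mp_unit_l mp); apply (mp_refl mp). tauto.
    + intros hp. exists eM, p. split; [apply leM_refl|split; auto].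
      split; simpl. rewrite (mp_unit_l mp); apply (mp_refl mp). unfold topP; tauto.
  - intros a; apply D_ext; intro p; simpl; split.
    + intros [q [r [h1 [h2 h3]]]]. apply (proj2_sig a p q); auto.
      eapply leM_trans; [exact h3|]. eapply leM_trans. apply leM_mul; [apply leM_refl|exact h2].
      split; simpl. rewrite (mp_unit_r mp); apply (mp_refl mp). tauto.
    + intros hp. exists p, eM. split; auto; split; [apply leM_refl|].
      split; simpl. rewrite (mp_unit_r mp); apply (mp_refl mp). unfold topP; tauto.
  - intros a a' b h p [q [r [h1 [h2 h3]]]]. exists q, r; auto.
  - intros a b b' h p [q [r [h1 [h2 h3]]]]. exists q, r; auto.
Qed.

Definition DQ : Quantale.
Proof.
  refine {| qcar := D; qle := Dle; qmul := Dmul; qe := De; qsup := Dsup; q_mp := Dmp |}.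
  - intros S x hx p hp. exists x; auto.
  - intros S u h p [U [h1 h2]]. apply (h U); auto.
  - intros a S; apply D_ext; intro p; simpl; split.
    + intros [q [r [h1 [[U [h2 h3]] h4]]]]. exists (Dmul a U). split; [exists U; auto|].
      simpl. exists q, r; auto.
    + intros [Y [[U [h1 ->]] [q [r [h2 [h3 h4]]]]]]. exists q, r. split; auto. split; auto. exists U; auto.
  - intros a S; apply D_ext; intro p; simpl; split.
    + intros [q [r [[U [h2 h3]] [h1 h4]]]]. exists (Dmul U a). split; [exists U; auto|].
      simpl. exists q, r; auto.
    + intros [Y [[U [h1 ->]] [q [r [h2 [h3 h4]]]]]]. exists q, r. split; [exists U; auto|]. auto.
Defined.

Program Definition Dnab (U : D) : D :=
  fun p => exists q, proj1_sig U q /\ leM p (fst q, topP).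
Next Obligation. intros p q h [q0 [h1 h2]]. exists q0; split; eauto using leM_trans. Qed.

Definition DS : Spacetime.
Proof.
  refine {| st_q := DQ; nabla := Dnab |}.
  - intros S; apply D_ext; intro p; simpl; split.
    + intros [q [[U [h1 h2]] h3]]. exists (Dnab U). split; [exists U; auto|]. simpl. exists q; auto.
    + intros [Y [[U [h1 ->]] [q [h2 h3]]]]. exists q. split; auto. exists U; auto.
  - intros p [q [h1 h2]]. simpl in *. eapply leM_trans; [exact h2|].
    split; simpl; [exact (proj1 h1)|auto].
  - intros a b p [q [[q1 [r1 [h1 [h2 h3]]]] h4]]. simpl.
    exists (fst q1, topP), (fst r1, topP). split; [exists q1; split; auto; apply leM_refl|].
    split; [exists r1; split; auto; apply leM_refl|].
    eapply leM_trans; [exact h4|]. split; simpl. exact (proj1 h3). unfold topP; tauto.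
Defined.

Program Definition Di (a : A) : D := fun p => leM p (a, topP).
Next Obligation. intros p q h h'; eauto using leM_trans. Qed.

Definition tc (c : A) : A -> Prop := fun z => le z c.
Definition G (a : A) (p : M) : Prop := exists c, leM p (imp c a, tc c).

Program Definition DF (U : D) : D :=
  fun p => exists a, Dle (Di a) U /\ G a p.
Next Obligation.
  intros p q h [a [h1 [c h2]]]. exists a; split; auto. exists c; eauto using leM_trans.
Qed.

Lemma main_lemma :
  exists (S : Spacetime) (F : S -> S) (i : A -> S),
    (forall x y, @qle S x y -> @qle S (F x) (F y)) /\
    strict_monoidal_order_embedding le mul e i /\
    (forall a b, i (imp a b) = @impS S (F (i a)) (F (i b))).
Proof.
  pose proof (proj1 H) as mp. pose proof (proj2 H) as ip.
  exists DS, DF, Di.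
  split; [|split; [split; [|split]|]].
  - intros x y hxy p [a [h1 h2]]. exists a; split; auto. intros q hq; apply hxy; auto.
  - apply D_ext. intro p; simpl. unfold eM; tauto.
  - intros a b; apply D_ext; intro p; simpl; split.
    + intros hp. exists (a, topP), (b, topP). split; [apply leM_refl|split; [apply leM_refl|]].
      eapply leM_trans; [exact hp|]. split; simpl; [apply (mp_refl mp)|unfold topP; tauto].
    + intros [q [r [h1 [h2 h3]]]]. eapply leM_trans; [exact h3|].
      eapply leM_trans. apply leM_mul; eauto. split; simpl; [apply (mp_refl mp)|unfold topP; tauto].
  - intros a b; split.
    + intros h p hp. simpl in *. eapply leM_trans; [exact hp|]. split; simpl; auto.
    + intros h. assert (hh := h (a, topP) (leM_refl _)). exact (proj1 hh).
  - intros a b. apply D_ext; intro p; simpl; split.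
    + intros hp. exists (Di (imp a b)). split.
      * intros q [q0 [hq0 hq]]. simpl in *.
        exists (Di (imp a b)). split.
        -- intros s [s1 [r1 [[a' [h1 [c h2]]] [h3 h4]]]]. simpl in *.
           exists b. split; [intros t ht; exact ht|]. exists c.
           eapply leM_trans; [exact h4|]. eapply leM_trans. apply leM_mul; [exact h2|exact h3].
           split; simpl; [|unfold tc; tauto].
           assert (la : le a' a) by exact (proj1 (h1 (a', topP) (leM_refl _))).
           eapply (mp_trans mp). apply (mp_mono_l mp). apply (imp_mono ip). exact la.
           apply (imp_comp ip).
        -- simpl. eapply leM_trans; [exact hq|]. split; simpl; [exact (proj1 hq0)|auto].
      * exact hp.
    + intros [V [hV hp]].
      assert (hn : proj1_sig (Dnab V) (fst p, topP)) by (exists p; split; [auto|apply leM_refl]).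
      destruct (hV _ hn) as [W [hW hw]].
      assert (hq : proj1_sig (Dmul (DF (Di a)) W)
                     (mulM (imp a a, tc a) (fst p, topP))).
      { exists (imp a a, tc a), (fst p, topP). split; [|split; [exact hw|apply leM_refl]].
        exists a. split; [intros t ht; exact ht|]. exists a. apply leM_refl. }
      destruct (hW _ hq) as [b' [hb' [c [hc1 hc2]]]]. simpl in *.
      assert (ac : le a c) by (apply hc2; split; [apply (mp_refl mp)|exact I]).
      assert (lb : le b' b) by exact (proj1 (hb' (b', topP) (leM_refl _))).
      split; simpl; [|intros; exact I].
      eapply (mp_trans mp); [|apply (imp_mono ip); exact lb].
      eapply (mp_trans mp); [|apply (imp_anti ip); exact ac].
      eapply (mp_trans mp); [|exact hc1].
      rewrite <- (mp_unit_l mp (fst p)) at 1.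
      apply (mp_mono_l mp). apply (imp_refl ip).
Qed.

End Constr.

Theorem theorem6p1 (A : Type) (le : A -> A -> Prop) (mul : A -> A -> A) (e : A)
  (imp : A -> A -> A) :
  strong_algebra le mul e imp ->
  exists (S : Spacetime) (F : S -> S) (i : A -> S),
    (forall x y, @qle S x y -> @qle S (F x) (F y)) /\
    strict_monoidal_order_embedding le mul e i /\
    (forall a b, i (imp a b) = @impS S (F (i a)) (F (i b))).
Proof. intros H; eapply main_lemma; exact H. Qed.
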